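(* Consider on $M_h$ with $2h=1$ the reduced $23$-spherical integrable system $(\ell_{34},G_{23})$, where $G_{23}=\ell_{12}^2+\ell_{13}^2+\ell_{14}^2$. The image of the momentum map $(\ell_{34},G_{23}):M_h\to\mathbb R^2$ has critical values $\mathfrak C_1: G_{23}=1-\ell_{34}^2$ and $\mathfrak C_2: G_{23}=0$, which are both codimension one elliptic.
   Context: $\mathbf L=(\ell_{12},\ell_{13},\ell_{14},\ell_{23},\ell_{24},\ell_{34})\in\mathbb R^6\cong\mathfrak{so}(4)^*$ with the Lie–Poisson bracket of $\mathfrak{so}(4)$ (extending $\ell_{ji}=-\ell_{ij}$: $\{\ell_{ij},\ell_{jk}\}=-\ell_{ik}$ for distinct $i,j,k$, and $\{\ell_{ij},\ell_{kl}\}=0$ when $\{i,j\}\cap\{k,l\}=\emptyset$). $M_h=\{\mathbf L:\sum_{i<j}\ell_{ij}^2=2h,\ \ell_{12}\ell_{34}-\ell_{13}\ell_{24}+\ell_{14}\ell_{23}=0\}\cong S^2\times S^2$ is a symplectic leaf. A codimension one elliptic critical value is one whose critical points have rank-one differential of the momentum map with an elliptic (purely imaginary eigenvalue) transverse linearisation. *)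

(* Defs.v *)
From HB Require Import structures.
From mathcomp Require Import all_boot all_order all_algebra.
From mathcomp Require Import complex.
From mathcomp Require Import mpoly.
From Stdlib Require Rdefinitions.
From mathcomp Require Import Rstruct.

Set Implicit Arguments.
Unset Strict Implicit.
Unset Printing Implicit Defensive.

Import Order.TTheory GRing.Theory Num.Theory.
Local Open Scope ring_scope.

(** Coordinates on R^6 = so(4)^* : index 0..5 stands for
    l12, l13, l14, l23, l24, l34 (in this order). *)
Definition Rr : rcfType := Rdefinitions.R.

Definition poly6 := {mpoly Rr[6]}.
Definition pt := 'I_6 -> Rr.

Definition i12 : 'I_6 := @Ordinal 6 0 isT.
Definition i13 : 'I_6 := @Ordinal 6 1 isT.
Definition i14 : 'I_6 := @Ordinal 6 2 isT.
Definition i23 : 'I_6 := @Ordinal 6 3 isT.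
Definition i24 : 'I_6 := @Ordinal 6 4 isT.
Definition i34 : 'I_6 := @Ordinal 6 5 isT.

Definition X (a : 'I_6) : poly6 := 'X_a.

(** the pair {i,j} (i<j, indices 0..3 for 1..4) of a coordinate *)
Definition pr (a : 'I_6) : nat * nat :=
  match val a with
  | 0 => (0, 1)%N | 1 => (0, 2)%N | 2 => (0, 3)%N
  | 3 => (1, 2)%N | 4 => (1, 3)%N | _ => (2, 3)%N
  end.

(** l_ij for arbitrary i, j in {0..3}, extended by l_ji = - l_ij, l_ii = 0 *)
Definition Lij (i j : nat) : poly6 :=
  \sum_(a < 6)
     (((pr a == (i, j)) %:R - (pr a == (j, i)) %:R) *: X a).

Definition dl (i j : nat) : Rr := (i == j)%:R.

(** Lie–Poisson bracket of so(4)^* on coordinate functions: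
    {l_ij, l_kl} = -(d_jk l_il - d_ik l_jl - d_jl l_ik + d_il l_jk),
    i.e. the bilinear antisymmetric extension of {l_ij,l_jk} = -l_ik
    (i,j,k distinct) and {l_ij,l_kl} = 0 for disjoint pairs. *)
Definition Pi (a b : 'I_6) : poly6 :=
  let: (i, j) := pr a in let: (k, l) := pr b in
  - (dl j k *: Lij i l - dl i k *: Lij j l - dl j l *: Lij i k
     + dl i l *: Lij j k).

Definition pbr (f g : poly6) : poly6 :=
  \sum_(a < 6) \sum_(b < 6) Pi a b * f^`M(a) * g^`M(b).

Definition hamvf (H : poly6) (a : 'I_6) : poly6 := pbr (X a) H.

Definition Cas1 : poly6 := \sum_(a < 6) X a ^+ 2.
Definition Cas2 : poly6 := X i12 * X i34 - X i13 * X i24 + X i14 * X i23.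

Definition inM (p : pt) : Prop := Cas1.@[p] = 1 /\ Cas2.@[p] = 0.

Definition G23 : poly6 := X i12 ^+ 2 + X i13 ^+ 2 + X i14 ^+ 2.
Definition F1 : poly6 := X i34.
Definition F2 : poly6 := G23.
Definition Fmap (p : pt) : Rr * Rr := (F1.@[p], F2.@[p]).

Definition gradcols (k : nat) (fs : 'I_k -> poly6) (p : pt) : 'M[Rr]_(6, k) :=
  \matrix_(a < 6, j < k) ((fs j)^`M(a)).@[p].

Definition Fs : 'I_2 -> poly6 := fun j => if val j == 0%N then F1 else F2.
Definition Cs : 'I_2 -> poly6 := fun j => if val j == 0%N then Cas1 else Cas2.

(** T_pM is the row space of kermx (gradient of Casimirs);
    rank of the differential of (F1,F2) restricted to T_pM *)
Definition rank_dF (p : pt) : nat :=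
  \rank (kermx (gradcols Cs p) *m gradcols Fs p).

Definition critical_point (p : pt) : Prop := inM p /\ (rank_dF p < 2)%N.

Definition critical_value (c : Rr * Rr) : Prop :=
  exists p, critical_point p /\ Fmap p = c.

Definition in_image (c : Rr * Rr) : Prop := exists p, inM p /\ Fmap p = c.

Definition rank0_value (c : Rr * Rr) : Prop :=
  exists p, inM p /\ rank_dF p = 0%N /\ Fmap p = c.

Definition linearisation (H : poly6) (p : pt) : 'M[Rr]_6 :=
  \matrix_(a < 6, b < 6) ((hamvf H a)^`M(b)).@[p].

Definition elliptic_mx (A : 'M[Rr]_6) : Prop :=
  let Ac := map_mx (fun x : Rr => (x%:C)%C) A in
  (forall z : Rr[i], eigenvalue Ac z -> complex.Re z = 0) /\
  (exists z : Rr[i], eigenvalue Ac z /\ z != 0).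

(** rank-one point p with elliptic transverse linearisation: the nontrivial
    combination H = al*F1 + be*F2 whose differential vanishes on T_pM has an
    elliptic linearisation *)
Definition elliptic_rank1_point (p : pt) : Prop :=
  rank_dF p = 1%N /\
  exists al be : Rr, (al != 0 \/ be != 0) /\
    let H := al *: F1 + be *: F2 in
    kermx (gradcols Cs p) *m gradcols (fun _ : 'I_1 => H) p = 0 /\
    elliptic_mx (linearisation H p).

Definition codim1_elliptic_value (c : Rr * Rr) : Prop :=
  forall p, critical_point p -> Fmap p = c -> elliptic_rank1_point p.

(* Main.v *)
Set Warnings "-notation-overridden,-ambiguous-paths,-notation-incompatible-prefix,-deprecated".
Require Import Defs.
From HB Require Import structures.
From mathcomp Require Import all_boot all_order all_algebra.
From mathcomp Require Import complex mpoly.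
From mathcomp Require Import Rstruct.
From mathcomp Require Import ring lra zify.
Import GRing.Theory Num.Theory.
Local Open Scope ring_scope.

Lemma dX (a b : 'I_6) : (X a)^`M(b) = ((a == b)%:R)%:MP.
Proof.
rewrite /X mderivX mnm1E; case: eqP => [->|_].
  have -> : (U_(b) - U_(b))%MM = 0%MM by apply/mnmP => i; rewrite mnmBE mnm0E subnn.
  by rewrite mpolyX0 scale1r.
by rewrite scale0r mpolyC0.
Qed.

Lemma eX (p : pt) a : (X a).@[p] = p a.
Proof. exact: mevalXU. Qed.

Definition cv (x0 x1 x2 x3 x4 x5 : Rr) (a : 'I_6) : Rr :=
  match val a with 0 => x0 | 1 => x1 | 2 => x2 | 3 => x3 | 4 => x4 | _ => x5 end.

Ltac dsimp := rewrite ?(mderivD, mderivB, mderivN, mderivZ, mderivM, dX, mderivC, expr2,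
   mevalD, mevalB, mevalN, mevalZ, mevalM, mevalC, eX) /= ?/cv /=.


Lemma pt_cv (p : pt) : p = cv (p i12) (p i13) (p i14) (p i23) (p i24) (p i34).
Proof.
apply: FunctionalExtensionality.functional_extensionality => a.
by case: a => [[|[|[|[|[|[|//]]]]]] Ha] /=; congr p; apply: val_inj.
Qed.





Lemma gC1 (x0 x1 x2 x3 x4 x5 : Rr) a : (Cas1^`M(a)).@[(cv x0 x1 x2 x3 x4 x5)] = 2 * (cv x0 x1 x2 x3 x4 x5) a.
Proof.
rewrite /Cas1 !big_ord_recl big_ord0.
by case: a => [[|[|[|[|[|[|//]]]]]] Ha]; dsimp; ring.
Qed.

Lemma gC2 (x0 x1 x2 x3 x4 x5 : Rr) a : (Cas2^`M(a)).@[(cv x0 x1 x2 x3 x4 x5)] = cv x5 (- x4) x3 x2 (- x1) x0 a.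
Proof.
by rewrite /Cas2; case: a => [[|[|[|[|[|[|//]]]]]] Ha]; dsimp; ring.
Qed.

Lemma gF1 (x0 x1 x2 x3 x4 x5 : Rr) a : (F1^`M(a)).@[(cv x0 x1 x2 x3 x4 x5)] = cv 0 0 0 0 0 1 a.
Proof.
by rewrite /F1; case: a => [[|[|[|[|[|[|//]]]]]] Ha]; dsimp.
Qed.

Lemma gF2 (x0 x1 x2 x3 x4 x5 : Rr) a : (F2^`M(a)).@[(cv x0 x1 x2 x3 x4 x5)] = cv (2 * x0) (2 * x1) (2 * x2) 0 0 0 a.
Proof.
by rewrite /F2 /G23; case: a => [[|[|[|[|[|[|//]]]]]] Ha]; dsimp; ring.
Qed.

Lemma gH (x0 x1 x2 x3 x4 x5 : Rr) al be a : ((al *: F1 + be *: F2)^`M(a)).@[(cv x0 x1 x2 x3 x4 x5)] =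
  cv (2 * be * x0) (2 * be * x1) (2 * be * x2) 0 0 al a.
Proof.
rewrite mderivD !mderivZ mevalD !mevalZ gF1 gF2 /cv.
by case: a => [[|[|[|[|[|[|//]]]]]] Ha] /=; ring.
Qed.

Lemma hF2 (x0 x1 x2 x3 x4 x5 : Rr) b b2 : (((F2^`M(b))^`M(b2))).@[(cv x0 x1 x2 x3 x4 x5)] =
  2 * ((i12 == b)%:R * (i12 == b2)%:R) + 2 * ((i13 == b)%:R * (i13 == b2)%:R)
  + 2 * ((i14 == b)%:R * (i14 == b2)%:R).
Proof. rewrite /F2 /G23; dsimp; ring. Qed.

Lemma hH (x0 x1 x2 x3 x4 x5 : Rr) al be b b2 : (((al *: F1 + be *: F2)^`M(b))^`M(b2)).@[(cv x0 x1 x2 x3 x4 x5)] =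
  cv (2 * be) (2 * be) (2 * be) 0 0 0 b * (b == b2)%:R.
Proof.
rewrite mderivD !mderivZ mderivD !mderivZ {1}/F1 dX mderivC scaler0 add0r mevalZ hF2.
by case: b => [[|[|[|[|[|[|//]]]]]] Hb]; case: b2 => [[|[|[|[|[|[|//]]]]]] Hb2]; rewrite /cv /=; ring.
Qed.




Definition lc (i j : nat) (c : 'I_6) : Rr := (pr c == (i,j))%:R - (pr c == (j,i))%:R.
Definition pc (a b c : 'I_6) : Rr :=
  let: (i, j) := pr a in let: (k, l) := pr b in
  - (dl j k * lc i l c - dl i k * lc j l c - dl j l * lc i k c + dl i l * lc j k c).

Lemma dLij i j d (q : pt) : ((Lij i j)^`M(d)).@[q] = lc i j d.
Proof.
rewrite /Lij (raddf_sum (mderiv d)) (raddf_sum (meval q)) /=.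
rewrite (bigD1 d) //= big1 ?addr0.
  by rewrite mderivZ mevalZ dX mevalC eqxx mulr1.
by move=> c /negbTE cd; rewrite mderivZ mevalZ dX mevalC cd mulr0.
Qed.

Lemma eLij i j (q : pt) : (Lij i j).@[q] = \sum_c lc i j c * q c.
Proof.
rewrite /Lij (raddf_sum (meval q)) /=; apply: eq_bigr => c _.
by rewrite mevalZ eX.
Qed.

Lemma dPi a b d (q : pt) : ((Pi a b)^`M(d)).@[q] = pc a b d.
Proof.
rewrite /Pi /pc; case: (pr a) => i j; case: (pr b) => k l.
by rewrite !(mderivD, mderivB, mderivN, mderivZ) !(mevalD, mevalB, mevalN, mevalZ) !dLij.
Qed.

Lemma ePi a b (q : pt) : (Pi a b).@[q] = \sum_c pc a b c * q c.
Proof.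
rewrite /Pi /pc; case: (pr a) => i j; case: (pr b) => k l.
rewrite !(mevalD, mevalB, mevalN, mevalZ) !eLij.
rewrite !big_ord_recl !big_ord0; ring.
Qed.

Lemma lin_entry H (q : pt) a b2 : linearisation H q a b2 =
  \sum_b (pc a b b2 * (H^`M(b)).@[q] + (\sum_c pc a b c * q c) * ((H^`M(b))^`M(b2)).@[q]).
Proof.
rewrite mxE /hamvf /pbr (bigD1 a (F := fun a' => \sum_(b < 6) Pi a' b * (X a)^`M(a') * H^`M(b))) //=.
rewrite [X in _ + X]big1 ?addr0; last first.
  move=> c /negbTE ca; apply: big1 => b _.
  by rewrite dX eq_sym ca mpolyC0 mulr0 mul0r.
rewrite dX eqxx mpolyC1 (raddf_sum (mderiv b2)) (raddf_sum (meval q)) /=; apply: eq_bigr => b _.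
by rewrite mulr1 mderivM mevalD !mevalM dPi ePi.
Qed.


Definition mI (y1 y2 a : Rr) : 'M[Rr]_6 := \matrix_(i < 6, j < 6)
  match val i, val j with
  | 0, 3 => 2 * y1 | 0, 4 => 2 * y2 | 1, 5 => 2 * y2 | 2, 5 => - (2 * y1)
  | 3, 4 => - (2 * a) | 4, 3 => 2 * a | _, _ => 0 end.

Lemma linI y1 y2 a :
  linearisation ((2 * a) *: F1 + 1 *: F2) (cv 0 y1 y2 0 0 a) = mI y1 y2 a.
Proof.
apply/matrixP => i j; rewrite lin_entry mxE.
under eq_bigr => b _ do rewrite gH hH.
rewrite !big_ord_recl !big_ord0.
case: i => [[|[|[|[|[|[|//]]]]]] Hi]; case: j => [[|[|[|[|[|[|//]]]]]] Hj];
  rewrite /pc /lc /dl /cv /=; ring.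
Qed.

Definition mII (y3 y4 a : Rr) : 'M[Rr]_6 := \matrix_(i < 6, j < 6)
  match val i, val j with
  | 0, 1 => 2 * y3 | 0, 2 => 2 * y4 | 1, 0 => - (2 * y3) | 1, 2 => 2 * a
  | 2, 0 => - (2 * y4) | 2, 1 => - (2 * a) | _, _ => 0 end.

Lemma linII y3 y4 a :
  linearisation (0 *: F1 + 1 *: F2) (cv 0 0 0 y3 y4 a) = mII y3 y4 a.
Proof.
apply/matrixP => i j; rewrite lin_entry mxE.
under eq_bigr => b _ do rewrite gH hH.
rewrite !big_ord_recl !big_ord0.
case: i => [[|[|[|[|[|[|//]]]]]] Hi]; case: j => [[|[|[|[|[|[|//]]]]]] Hj];
  rewrite /pc /lc /dl /cv /=; ring.
Qed.


Definition cvg {T : Type} (x0 x1 x2 x3 x4 x5 : T) (a : 'I_6) : T :=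
  match val a with 0 => x0 | 1 => x1 | 2 => x2 | 3 => x3 | 4 => x4 | _ => x5 end.

Lemma row_cv {T : Type} (v : 'M[T]_(1,6)) :
  v = \row_j cvg (v 0 i12) (v 0 i13) (v 0 i14) (v 0 i23) (v 0 i24) (v 0 i34) j.
Proof.
apply/matrixP => i j; rewrite mxE (ord1 i).
by case: j => [[|[|[|[|[|[|//]]]]]] Hj] /=; congr (v _ _); apply: val_inj.
Qed.

Lemma Re0 (z : Rr[i]) (r : Rr) : 0 <= r -> z ^+ 2 + (r%:C)%C = 0 -> complex.Re z = 0.
Proof.
case: z => x y /= r0 h.
have h1 := congr1 (@complex.Re _) h.
have h2 := congr1 (@complex.Im _) h.
move: h1 h2 => /= e1 e2.
have : x * x = 0 by nra.
by move/eqP; rewrite mulf_eq0 orbb => /eqP.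
Qed.


Lemma ellI y1 y2 a : a != 0 -> elliptic_mx (mI y1 y2 a).
Proof.
move=> a0; split.
  move=> z /eigenvalueP [v Hv v0].
  have [w0 [w1 [w2 [w3 [w4 [w5 vE]]]]]] : exists w0 w1 w2 w3 w4 w5,
     v = \row_j cvg w0 w1 w2 w3 w4 w5 j by do 6 eexists; apply: row_cv.
  subst v.
  have E (j : 'I_6) := congr1 (fun M : 'M_(1,6) => M 0 j) Hv.
  have := E i12; have := E i13; have := E i14; have := E i23; have := E i24; have := E i34.
  rewrite !mxE !big_ord_recl !big_ord0 !mxE /= ?(rmorphM, rmorphN, rmorph0, rmorph_nat).
  rewrite /cvg /= !(mulr0, addr0, add0r).
  set Y1 := (y1%:C)%C; set Y2 := (y2%:C)%C; set A := (a%:C)%C.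
  move=> e5 e4 e3 e2 e1 e0.
  have wnz : ~ (w0 = 0 /\ w1 = 0 /\ w2 = 0 /\ w3 = 0 /\ w4 = 0 /\ w5 = 0).
    move=> [h0 [h1 [h2 [h3 [h4 h5]]]]]; move/eqP: v0; apply; apply/rowP => j; rewrite !mxE.
    by case: j => [[|[|[|[|[|[|//]]]]]] ?]; rewrite /cvg /=.
  have [->|z0] := eqVneq z 0; first by [].
  have zK w : 0 = z * w -> w = 0 by move=> h; move/eqP: (esym h); rewrite mulf_eq0 (negPf z0) /= => /eqP.
  have h0 := zK _ e0; have h1 := zK _ e1; have h2 := zK _ e2.
  rewrite h1 h2 !mul0r addr0 in e5; have h5 := zK _ e5.
  rewrite h0 mul0r add0r in e3 e4.
  have k3 : (z ^+ 2 + 4 * A ^+ 2) * w3 = 0.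
    transitivity (z * (z * w3) + 4 * A ^+ 2 * w3); first ring.
    rewrite -e3; transitivity (2 * A * (z * w4) + 4 * A ^+ 2 * w3); first ring.
    rewrite -e4; ring.
  have k4 : (z ^+ 2 + 4 * A ^+ 2) * w4 = 0.
    transitivity (z * (z * w4) + 4 * A ^+ 2 * w4); first ring.
    rewrite -e4; transitivity (- (2 * A) * (z * w3) + 4 * A ^+ 2 * w4); first ring.
    rewrite -e3; ring.
  have kz : z ^+ 2 + 4 * A ^+ 2 = 0.
    move: k3 k4 => /eqP; rewrite mulf_eq0 => /orP [/eqP //|/eqP h3].
    move/eqP; rewrite mulf_eq0 => /orP [/eqP //|/eqP h4].
    by case: wnz.
  apply: (@Re0 z (4 * a ^+ 2)); first by nra.
  by rewrite rmorphM rmorphXn rmorph_nat.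
exists (((2 * a)%:C)%C * 'i%C); split; last first.
  rewrite mulf_eq0 negb_or; apply/andP; split.
    by rewrite (inj_eq (@complexI _)) mulf_eq0 negb_or a0 andbT pnatr_eq0.
  by apply/eqP => /(congr1 (@complex.Im _)) /= /eqP; rewrite oner_eq0.
apply/eigenvalueP; exists (\row_j cvg 0 0 0 1 'i%C 0 j); last first.
  apply/eqP => /(congr1 (fun M : 'M_(1,6) => M 0 i23)); rewrite !mxE /cvg /=.
  by move/eqP; rewrite oner_eq0.
apply/rowP => j; rewrite !mxE !big_ord_recl !big_ord0 !mxE.
case: j => [[|[|[|[|[|[|//]]]]]] Hj]; rewrite /cvg /= ?(rmorphM, rmorphN, rmorph0, rmorph_nat, rmorph1).
1-4,6: ring.
have hi : 'i%C * 'i%C = -1 :> Rr[i].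
  by apply/eqP; rewrite eq_complex /=; apply/andP; split; apply/eqP; ring.
by rewrite -[RHS]mulrA hi; ring.
Qed.


Lemma hiC : 'i%C * 'i%C = -1 :> Rr[i].
Proof. by apply/eqP; rewrite eq_complex /=; apply/andP; split; apply/eqP; ring. Qed.

Lemma ellII y3 y4 a : y3 ^+ 2 + y4 ^+ 2 + a ^+ 2 = 1 -> elliptic_mx (mII y3 y4 a).
Proof.
move=> hS; split.
  move=> z /eigenvalueP [v Hv v0].
  have [w0 [w1 [w2 [w3 [w4 [w5 vE]]]]]] : exists w0 w1 w2 w3 w4 w5,
     v = \row_j cvg w0 w1 w2 w3 w4 w5 j by do 6 eexists; apply: row_cv.
  subst v.
  have E (j : 'I_6) := congr1 (fun M : 'M_(1,6) => M 0 j) Hv.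
  have := E i12; have := E i13; have := E i14; have := E i23; have := E i24; have := E i34.
  rewrite !mxE !big_ord_recl !big_ord0 !mxE /= ?(rmorphM, rmorphN, rmorph0, rmorph_nat).
  rewrite /cvg /= !(mulr0, addr0, add0r).
  have hSC : (y3%:C)%C ^+ 2 + (y4%:C)%C ^+ 2 + (a%:C)%C ^+ 2 = 1.
    by rewrite -!rmorphXn -!rmorphD hS rmorph1.
  set Y3 := (y3%:C)%C in hSC *; set Y4 := (y4%:C)%C in hSC *; set A := (a%:C)%C in hSC *.
  move=> e5 e4 e3 e2 e1 e0.
  have wnz : ~ (w0 = 0 /\ w1 = 0 /\ w2 = 0 /\ w3 = 0 /\ w4 = 0 /\ w5 = 0).
    move=> [h0 [h1 [h2 [h3 [h4 h5]]]]]; move/eqP: v0; apply; apply/rowP => j; rewrite !mxE.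
    by case: j => [[|[|[|[|[|[|//]]]]]] ?]; rewrite /cvg /=.
  have [->|z0] := eqVneq z 0; first by [].
  have zK w : 0 = z * w -> w = 0.
    by move=> h; move/eqP: (esym h); rewrite mulf_eq0 (negPf z0) /= => /eqP.
  have h3 := zK _ e3; have h4 := zK _ e4; have h5 := zK _ e5.
  have hQ : 0 = z * (A * w0 - Y4 * w1 + Y3 * w2).
    transitivity (A * (z * w0) - Y4 * (z * w1) + Y3 * (z * w2)); last by ring.
    rewrite -e0 -e1 -e2; ring.
  have Q0 := zK _ hQ.
  have k0 : (z ^+ 2 + 4) * w0 = 0.
    transitivity (z * (z * w0) + 4 * w0); first ring.
    rewrite -e0; transitivity (-2 * Y3 * (z * w1) - 2 * Y4 * (z * w2) + 4 * w0); first ring.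
    rewrite -e1 -e2.
    transitivity (4 * A * (A * w0 - Y4 * w1 + Y3 * w2) + 4 * (1 - (Y3 ^+ 2 + Y4 ^+ 2 + A ^+ 2)) * w0); first ring.
    by rewrite Q0 hSC; ring.
  have k1 : (z ^+ 2 + 4) * w1 = 0.
    transitivity (z * (z * w1) + 4 * w1); first ring.
    rewrite -e1; transitivity (2 * Y3 * (z * w0) - 2 * A * (z * w2) + 4 * w1); first ring.
    rewrite -e0 -e2.
    transitivity (-4 * Y4 * (A * w0 - Y4 * w1 + Y3 * w2) + 4 * (1 - (Y3 ^+ 2 + Y4 ^+ 2 + A ^+ 2)) * w1); first ring.
    by rewrite Q0 hSC; ring.
  have k2 : (z ^+ 2 + 4) * w2 = 0.
    transitivity (z * (z * w2) + 4 * w2); first ring.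
    rewrite -e2; transitivity (2 * Y4 * (z * w0) + 2 * A * (z * w1) + 4 * w2); first ring.
    rewrite -e0 -e1.
    transitivity (4 * Y3 * (A * w0 - Y4 * w1 + Y3 * w2) + 4 * (1 - (Y3 ^+ 2 + Y4 ^+ 2 + A ^+ 2)) * w2); first ring.
    by rewrite Q0 hSC; ring.
  have kz : z ^+ 2 + 4 = 0.
    move: k0 => /eqP; rewrite mulf_eq0 => /orP [/eqP //|/eqP h0].
    move: k1 => /eqP; rewrite mulf_eq0 => /orP [/eqP //|/eqP h1].
    move: k2 => /eqP; rewrite mulf_eq0 => /orP [/eqP //|/eqP h2].
    by case: wnz.
  apply: (@Re0 z 4); first by [].
  by rewrite rmorph_nat.
have i0 : 'i%C != 0 :> Rr[i].
  by apply/eqP => /(congr1 (@complex.Im _)) /= /eqP; rewrite oner_eq0.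
exists (2 * 'i%C); split; last by rewrite mulf_eq0 negb_or pnatr_eq0 i0.
apply/eigenvalueP.
have hSC : (y3%:C)%C ^+ 2 + (y4%:C)%C ^+ 2 + (a%:C)%C ^+ 2 = 1.
  by rewrite -!rmorphXn -!rmorphD hS rmorph1.
have [s0|s0] := eqVneq (y3 ^+ 2 + y4 ^+ 2) 0.
  have y30 : y3 = 0 by apply/eqP; rewrite -sqrf_eq0; apply/eqP; nra.
  have y40 : y4 = 0 by apply/eqP; rewrite -sqrf_eq0; apply/eqP; nra.
  subst y3 y4.
  exists (\row_j cvg 0 1 (- ((a%:C)%C * 'i%C)) 0 0 0 j); last first.
    apply/eqP => /(congr1 (fun M : 'M_(1,6) => M 0 i13)); rewrite !mxE /cvg /=.
    by move/eqP; rewrite oner_eq0.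
  rewrite rmorph0 expr0n /= !add0r in hSC.
  apply/rowP => j; rewrite !mxE !big_ord_recl !big_ord0 !mxE.
  case: j => [[|[|[|[|[|[|//]]]]]] Hj]; rewrite /cvg /= ?(rmorphM, rmorphN, rmorph0, rmorph_nat, rmorph1).
  all: set A := (a%:C)%C in hSC *.
  1,4-6: ring.
    by transitivity (2 * 'i%C * A ^+ 2); [ring | rewrite hSC; ring].
  by transitivity (-(2 * A) * ('i%C * 'i%C)); [rewrite hiC; ring | ring].
set Y3 := (y3%:C)%C in hSC *; set Y4 := (y4%:C)%C in hSC *.
exists (\row_j cvg ('i%C * (Y3 ^+ 2 + Y4 ^+ 2)) (Y3 + 'i%C * A * Y4) (Y4 - 'i%C * A * Y3) 0 0 0 j); last first.
  apply/eqP => /(congr1 (fun M : 'M_(1,6) => M 0 i12)); rewrite !mxE /cvg /=.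
  move/eqP; rewrite mulf_eq0 (negPf i0) /= /Y3 /Y4 -!rmorphXn -rmorphD.
  by rewrite -(rmorph0 (real_complex Rr)) (inj_eq (@complexI _)) (negPf s0).
apply/rowP => j; rewrite !mxE !big_ord_recl !big_ord0 !mxE.
case: j => [[|[|[|[|[|[|//]]]]]] Hj]; rewrite /cvg /= ?(rmorphM, rmorphN, rmorph0, rmorph_nat, rmorph1).
all: rewrite -/Y3 -/Y4 -/A.
4-6: ring.
- apply/eqP; rewrite -subr_eq0; apply/eqP.
  transitivity (-2 * (Y3 ^+ 2 + Y4 ^+ 2) * ('i%C * 'i%C + 1)); first ring.
  by rewrite hiC; ring.
- apply/eqP; rewrite -subr_eq0; apply/eqP.
  transitivity (2 * 'i%C * Y3 * (Y3 ^+ 2 + Y4 ^+ 2 + A ^+ 2 - 1) - 2 * A * Y4 * ('i%C * 'i%C + 1)); first ring.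
  by rewrite hiC hSC; ring.
- apply/eqP; rewrite -subr_eq0; apply/eqP.
  transitivity (2 * 'i%C * Y4 * (Y3 ^+ 2 + Y4 ^+ 2 + A ^+ 2 - 1) + 2 * A * Y3 * ('i%C * 'i%C + 1)); first ring.
  by rewrite hiC hSC; ring.
Qed.





Lemma rank_lt2_of {F : fieldType} (C G : 'M[F]_(6,2)) (w t : 'cV_2) :
  w != 0 -> G *m w = C *m t -> (\rank (kermx C *m G) < 2)%N.
Proof.
move=> w0 Gw.
set A := (kermx C *m G)^T.
have h : w^T *m A = 0.
  by rewrite /A -trmx_mul -mulmxA Gw mulmxA mulmx_ker mul0mx trmx0.
have : (w^T <= kermx A)%MS by rewrite sub_kermx h.
move/mxrankS; rewrite mxrank_ker rank_rV trmx_eq0 w0 /A mxrank_tr.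
have := rank_leq_col (kermx C *m G). lia.
Qed.

Lemma colspan_of {F : fieldType} (C : 'M[F]_(6,2)) (y : 'cV_6) :
  kermx C *m y = 0 -> exists t : 'cV_2, y = C *m t.
Proof.
move=> Ky.
set K := kermx C.
have s1 : (y^T <= kermx K^T)%MS by rewrite sub_kermx -trmx_mul Ky trmx0.
have s2 : (C^T <= kermx K^T)%MS by rewrite sub_kermx -trmx_mul mulmx_ker trmx0.
have e : (C^T == kermx K^T)%MS.
  rewrite -(mxrank_leqif_eq s2).2 mxrank_ker !mxrank_tr /K mxrank_ker.
  have := rank_leq_col C; have := rank_leq_row C; move=> *; apply/eqP; lia.
have : (y^T <= C^T)%MS by move/andP: e => [_ e2]; apply: submx_trans e2.
case/submxP => D yD.
by exists D^T; rewrite -[y]trmxK yD trmx_mul trmxK.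
Qed.

Lemma ker_of_rank_lt2 {F : fieldType} (M : 'M[F]_(6,2)) :
  (\rank M < 2)%N -> exists w : 'cV_2, w != 0 /\ M *m w = 0.
Proof.
move=> r2.
set A := M^T.
have : kermx A != 0.
  rewrite -mxrank_eq0 mxrank_ker /A mxrank_tr; apply/eqP; lia.
case: (pickP (fun i => row i (kermx A) != 0)) => [i Hi _|H]; last first.
  by case/negP; apply/eqP/row_matrixP => i; rewrite row0; move/negbFE/eqP: (H i).
exists (row i (kermx A))^T; split; first by rewrite trmx_eq0.
have : (row i (kermx A) <= kermx A)%MS by apply: row_sub.
rewrite sub_kermx => /eqP h.
by rewrite -[M]trmxK -trmx_mul -/A h trmx0.
Qed.

Lemma rank_lt2_iff {F : fieldType} (C G : 'M[F]_(6,2)) :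
  (\rank (kermx C *m G) < 2)%N <->
  exists w : 'cV_2, w != 0 /\ exists t : 'cV_2, G *m w = C *m t.
Proof.
split; last by case=> w [w0 [t h]]; apply: rank_lt2_of w0 h.
move/ker_of_rank_lt2 => [w [w0 h]]; exists w; split => //.
by apply: colspan_of; rewrite mulmxA.
Qed.

Lemma rank0_of {F : fieldType} (C G : 'M[F]_(6,2)) (T : 'M_2) :
  G = C *m T -> \rank (kermx C *m G) = 0%N.
Proof. by move=> ->; rewrite mulmxA mulmx_ker mul0mx mxrank0. Qed.

Lemma ker_zero_of {F : fieldType} (C : 'M[F]_(6,2)) (G : 'cV_6) (T : 'cV_2) :
  G = C *m T -> kermx C *m G = 0.
Proof. by move=> ->; rewrite mulmxA mulmx_ker mul0mx. Qed.




Lemma alg1 {x0 x1 x2 x3 x4 x5 al be ta de : Rr} :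
  x0^+2 + x1^+2 + x2^+2 + x3^+2 + x4^+2 + x5^+2 = 1 ->
  x0 * x5 - x1 * x4 + x2 * x3 = 0 ->
  (al != 0) || (be != 0) ->
  al = 2 * x5 * ta + x0 * de ->
  0 = 2 * x4 * ta + - x1 * de ->
  0 = 2 * x3 * ta + x2 * de ->
  2 * x2 * be = 2 * x2 * ta + x3 * de ->
  2 * x1 * be = 2 * x1 * ta + - x4 * de ->
  2 * x0 * be = 2 * x0 * ta + x5 * de ->
  (x3 = 0 /\ x4 = 0) \/ (x0 = 0 /\ x1 = 0 /\ x2 = 0).
Proof.
move=> hC1 hC2 hab e5 e4 e3 e2 e1 e0.
have mz (u v : Rr) : u != 0 -> u * v = 0 -> v = 0.
  by move=> u0 /eqP; rewrite mulf_eq0 (negPf u0) /= => /eqP.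
have [s0|s0] := eqVneq (be - ta) 0.
  have bt : be = ta by apply/eqP; rewrite -subr_eq0 s0.
  subst be.
  have [d0|d0] := eqVneq de 0.
    subst de.
    have [t0|t0] := eqVneq ta 0.
      by subst ta; move: hab; rewrite e5 !mulr0 addr0 eqxx.
    left; split.
      by apply: (mz (2 * ta)); [rewrite mulf_eq0 negb_or t0 pnatr_eq0 | lra].
    by apply: (mz (2 * ta)); [rewrite mulf_eq0 negb_or t0 pnatr_eq0 | lra].
  left; split.
    by apply: (mz de) => //; lra.
  by apply: (mz de) => //; lra.
right.
have hG : 2 * (be - ta) * (x0^+2 + x1^+2 + x2^+2) = de * (x0 * x5 - x1 * x4 + x2 * x3).
  transitivity (x0 * (2 * x0 * be - 2 * x0 * ta) + x1 * (2 * x1 * be - 2 * x1 * ta)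
     + x2 * (2 * x2 * be - 2 * x2 * ta)); first ring.
  rewrite e0 e1 e2; ring.
rewrite hC2 mulr0 in hG.
have hG0 : x0^+2 + x1^+2 + x2^+2 = 0.
  by apply: (mz (2 * (be - ta))) => //; rewrite mulf_eq0 negb_or s0 pnatr_eq0.
split; [|split]; apply/eqP; rewrite -sqrf_eq0; apply/eqP; nra.
Qed.






Lemma eC1 (x0 x1 x2 x3 x4 x5 : Rr) : Cas1.@[(cv x0 x1 x2 x3 x4 x5)] = x0^+2 + x1^+2 + x2^+2 + x3^+2 + x4^+2 + x5^+2.
Proof. rewrite /Cas1 !big_ord_recl big_ord0; dsimp; ring. Qed.
Lemma eC2 (x0 x1 x2 x3 x4 x5 : Rr) : Cas2.@[(cv x0 x1 x2 x3 x4 x5)] = x0 * x5 - x1 * x4 + x2 * x3.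
Proof. rewrite /Cas2; dsimp; ring. Qed.
Lemma eF1 (x0 x1 x2 x3 x4 x5 : Rr) : F1.@[(cv x0 x1 x2 x3 x4 x5)] = x5.
Proof. by rewrite /F1; dsimp. Qed.
Lemma eF2 (x0 x1 x2 x3 x4 x5 : Rr) : F2.@[(cv x0 x1 x2 x3 x4 x5)] = x0^+2 + x1^+2 + x2^+2.
Proof. rewrite /F2 /G23; dsimp; ring. Qed.

Lemma crit_dir (x0 x1 x2 x3 x4 x5 : Rr) {w t : 'cV[Rr]_2} : inM (cv x0 x1 x2 x3 x4 x5) -> w != 0 ->
  gradcols Fs (cv x0 x1 x2 x3 x4 x5) *m w = gradcols Cs (cv x0 x1 x2 x3 x4 x5) *m t ->
  (x3 = 0 /\ x4 = 0) \/ (x0 = 0 /\ x1 = 0 /\ x2 = 0).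
Proof.
rewrite /inM eC1 eC2 => -[hC1 hC2] w0 h.
have hw : (w ord0 0 != 0) || (w (lift ord0 ord0) 0 != 0).
  apply/negPn/negP => /norP [/negPn/eqP a0 /negPn/eqP a1]; move/eqP: w0; apply.
  apply/matrixP => i j; rewrite (ord1 j) mxE.
  by case: i => [[|[|//]] Hi]; [rewrite -a0 | rewrite -a1]; congr (w _ _); apply: val_inj.
have E (a : 'I_6) := congr1 (fun M : 'cV_6 => M a 0) h.
have := E i12; have := E i13; have := E i14; have := E i23; have := E i24; have := E i34.
rewrite !mxE !big_ord_recl !big_ord0 !mxE /= !gF1 !gF2 !gC1 !gC2 /cv /=.
rewrite !(mul1r, mul0r, add0r, addr0).
move: hw; move: (w ord0 0) (w (lift ord0 ord0) 0) (t ord0 0) (t (lift ord0 ord0) 0).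
move=> al be ta de hab e5 e4 e3 e2 e1 e0.

exact: (alg1 hC1 hC2 hab e5 e4 e3 e2 e1 e0).
Qed.

Lemma crit_iff (x0 x1 x2 x3 x4 x5 : Rr) : inM (cv x0 x1 x2 x3 x4 x5) -> ((rank_dF (cv x0 x1 x2 x3 x4 x5) < 2)%N <->
  ((x3 = 0 /\ x4 = 0) \/ (x0 = 0 /\ x1 = 0 /\ x2 = 0))).
Proof.
move=> hM; rewrite /rank_dF rank_lt2_iff; split.
  by case=> w [w0 [t h]]; apply: (crit_dir _ _ _ _ _ _ hM w0 h).
case=> [[h3 h4]|[h0 [h1 h2]]].
  exists (\col_(i < 2) (if val i == 0%N then 2 * x5 else 1)); split.
    apply/eqP => /(congr1 (fun M : 'cV_2 => M (lift ord0 ord0) 0)); rewrite !mxE /=.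
    by move/eqP; rewrite oner_eq0.
  exists (\col_(i < 2) (if val i == 0%N then 1 else 0)).
  apply/matrixP => a j; rewrite (ord1 j) !mxE !big_ord_recl !big_ord0 !mxE /=.
  rewrite !gF1 !gF2 !gC1 !gC2 h3 h4.
  by case: a => [[|[|[|[|[|[|//]]]]]] Ha]; rewrite /cv /=; ring.
exists (\col_(i < 2) (if val i == 0%N then 0 else 1)); split.
  apply/eqP => /(congr1 (fun M : 'cV_2 => M (lift ord0 ord0) 0)); rewrite !mxE /=.
  by move/eqP; rewrite oner_eq0.
exists 0.
apply/matrixP => a j; rewrite (ord1 j) !mxE !big_ord_recl !big_ord0 !mxE /=.
rewrite !gF1 !gF2 h0 h1 h2.
by case: a => [[|[|[|[|[|[|//]]]]]] Ha]; rewrite /cv /=; ring.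
Qed.



Lemma kerI (y1 y2 a : Rr) :
  kermx (gradcols Cs (cv 0 y1 y2 0 0 a)) *m
  gradcols (fun _ : 'I_1 => (2 * a) *: F1 + 1 *: F2) (cv 0 y1 y2 0 0 a) = 0.
Proof.
apply: (@ker_zero_of _ _ _ (\col_(i < 2) (if val i == 0%N then 1 else 0))).
apply/matrixP => b j; rewrite (ord1 j) !mxE !big_ord_recl big_ord0 !mxE /=.
rewrite gH !gC1 !gC2.
by case: b => [[|[|[|[|[|[|//]]]]]] Hb]; rewrite /cv /=; ring.
Qed.

Lemma kerII (y3 y4 a : Rr) :
  kermx (gradcols Cs (cv 0 0 0 y3 y4 a)) *m
  gradcols (fun _ : 'I_1 => 0 *: F1 + 1 *: F2) (cv 0 0 0 y3 y4 a) = 0.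
Proof.
apply: (@ker_zero_of _ _ _ (0)).
apply/matrixP => b j; rewrite (ord1 j) !mxE !big_ord_recl big_ord0 !mxE /=.
rewrite gH.
by case: b => [[|[|[|[|[|[|//]]]]]] Hb]; rewrite /cv /=; ring.
Qed.

Lemma rank0_e0 : rank_dF (cv 1 0 0 0 0 0) = 0%N.
Proof.
apply: (@rank0_of _ _ _ (\matrix_(i < 2, j < 2) (if val i == val j then 0 else 1))).
apply/matrixP => b j; rewrite !mxE !big_ord_recl big_ord0 !mxE.
case: j => [[|[|//]] Hj] /=; rewrite ?gF1 ?gF2 !gC1 !gC2;
by case: b => [[|[|[|[|[|[|//]]]]]] Hb]; rewrite /cv /=; ring.
Qed.


Theorem proposition7 :
  (forall c : Rr * Rr,
     critical_value c <->
     (in_image c /\ (c.2 = 1 - c.1 ^+ 2 \/ c.2 = 0))) /\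
  (forall c : Rr * Rr,
     in_image c -> (c.2 = 1 - c.1 ^+ 2 \/ c.2 = 0) ->
     ~ rank0_value c -> codim1_elliptic_value c).
Proof.
split.
  move=> [c1 c2] /=; split.
    case=> p [[hM hr] hF]; split; first by exists p.
    move: hM hr hF; rewrite (pt_cv p).
    move: (p i12) (p i13) (p i14) (p i23) (p i24) (p i34) => x0 x1 x2 x3 x4 x5 hM hr.
    rewrite /Fmap eF1 eF2 => -[<- <-].
    have := hM; rewrite /inM eC1 eC2 => -[hC1 hC2].
    case/(crit_iff _ _ _ _ _ _ hM): hr => [[h3 h4]|[h0 [h1 h2]]]; [left; subst; lra | right; subst; ring].
  case=> [[p [hM hF]] hc]; exists p; split => //; split => //.
  move: hM hF; rewrite (pt_cv p).
  move: (p i12) (p i13) (p i14) (p i23) (p i24) (p i34) => x0 x1 x2 x3 x4 x5 hM.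
  rewrite /Fmap eF1 eF2 => -[e1 e2]; subst c1 c2.
  apply/(crit_iff _ _ _ _ _ _ hM).
  have := hM; rewrite /inM eC1 eC2 => -[hC1 hC2].
  case: hc => hc; [left | right].
    split; apply/eqP; rewrite -sqrf_eq0; apply/eqP; nra.
  split; [|split]; apply/eqP; rewrite -sqrf_eq0; apply/eqP; nra.
move=> [c1 c2] _ hc hn0 p [hM hr] hF.
move: hM hr hF; rewrite (pt_cv p).
move: (p i12) (p i13) (p i14) (p i23) (p i24) (p i34) => x0 x1 x2 x3 x4 x5 hM hr hF.
have r1 : rank_dF (cv x0 x1 x2 x3 x4 x5) = 1%N.
  have : rank_dF (cv x0 x1 x2 x3 x4 x5) != 0%N.
    by apply/eqP => h0; apply: hn0; exists (cv x0 x1 x2 x3 x4 x5).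
  move: hr; rewrite /rank_dF; lia.
move: hF; rewrite /Fmap eF1 eF2 => -[e1 e2]; subst c1 c2.
have := hM; rewrite /inM eC1 eC2 => -[hC1 hC2].
case/(crit_iff _ _ _ _ _ _ hM): (hr) => [[h3 h4]|[h0 [h1 h2]]]; last first.
  subst x0 x1 x2.
  split => //; exists 0, 1; split; first by right; rewrite oner_eq0.
  rewrite /=; split; first exact: kerII.
  rewrite linII; apply: ellII; lra.
subst x3 x4.
have [x50|x5n0] := eqVneq x5 0.
  subst x5; exfalso; apply: hn0.
  exists (cv 1 0 0 0 0 0); split; last split.
  - by rewrite /inM eC1 eC2; split; ring.
  - exact: rank0_e0.
  - by rewrite /Fmap eF1 eF2; congr (_, _); lra.
have x00 : x0 = 0.
  by apply/eqP; move: hC2; rewrite !mulr0 subr0 addr0 => /eqP; rewrite mulf_eq0 (negPf x5n0) orbF.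
subst x0.
split => //; exists (2 * x5), 1; split; first by right; rewrite oner_eq0.
rewrite /=; split; first exact: kerI.
rewrite linI; exact: ellI.
Qed.
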